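(* Let $B_1,\dots,B_D$ be resonator blocks, let $\chi\in\{1,\dots,D\}^{\mathbb{Z}}$ be a block sequence with associated resonator sequence, and let $\lambda\ge0$. Let $\mathcal{P}^\lambda:\mathbb{Z}\to\mathrm{SL}(2,\mathbb{R})$, $\mathcal{P}^\lambda(j)=\mathcal{P}^\lambda_{\chi(j)}$, be the block propagation matrix cocycle and $P^\lambda:\mathbb{Z}\to\mathrm{SL}(2,\mathbb{R})$, $P^\lambda(i)=P^\lambda_{\ell_i,s_i,v_i}$, the resonator propagation matrix cocycle. Then $\mathcal{P}^\lambda$ is uniformly hyperbolic if and only if $P^\lambda$ is uniformly hyperbolic.
   Context: A resonator block $B_d$ ($d=1,\dots,D$) is a finite sequence of $\mathrm{len}(B_d)\ge1$ triples $(v_k(B_d),\ell_k(B_d),s_k(B_d))$ of positive reals (wave speed, length, spacing to the next resonator). The resonator sequence $(v_i,\ell_i,s_i)_{i\in\mathbb{Z}}$ associated to $\chi$ is obtained by concatenating the blocks $B_{\chi(j)}$, $j\in\mathbb{Z}$, in order, indexed so that the first resonator of block $B_{\chi(0)}$ has index $0$. For $\ell,s,v>0$ the propagation matrix is $P^\lambda_{\ell,s,v}=\begin{pmatrix}1-s\frac{\ell}{v^2}\lambda & s\\ -\frac{\ell}{v^2}\lambda & 1\end{pmatrix}\in\mathrm{SL}(2,\mathbb{R})$, and the block propagation matrix is $\mathcal{P}^\lambda_d=P^\lambda_{\ell_{L},s_{L},v_{L}}\cdots P^\lambda_{\ell_1,s_1,v_1}$ with $L=\mathrm{len}(B_d)$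 and $(v_k,\ell_k,s_k)=(v_k(B_d),\ell_k(B_d),s_k(B_d))$. For a cocycle $A$ set $A_n(i)=A(i+n-1)\cdots A(i)$ ($n\ge1$), $A_{-n}(i)=(A(i-n))^{-1}\cdots(A(i-1))^{-1}$. A bounded $A:\mathbb{Z}\to\mathrm{SL}(2,\mathbb{R})$ is uniformly hyperbolic if there exist $s,u:\mathbb{Z}\to\mathbb{RP}^1$ (one-dimensional subspaces of $\mathbb{R}^2$) with $A(i)u(i)=u(i+1)$, $A(i)s(i)=s(i+1)$ for all $i$, and constants $C>0,\eta>1$ with $\|A_{-n}(i)\vec u\|\le C\eta^{-n}$, $\|A_n(i)\vec s\|\le C\eta^{-n}$ for all $i\in\mathbb{Z}$, $n\in\mathbb{N}$ and unit vectors $\vec u\in u(i)$, $\vec s\in s(i)$. *)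

(* Defs.v *)
From HB Require Import structures.
From mathcomp Require Import all_boot all_order all_algebra.
From mathcomp Require Import reals.
Set Implicit Arguments. Unset Strict Implicit. Unset Printing Implicit Defensive.
Import Order.TTheory GRing.Theory Num.Theory.
Local Open Scope ring_scope.

Section Defs.
Variable R : realType.

Definition mx2 (a b c d : R) : 'M[R]_2 :=
  \matrix_(i < 2, j < 2)
    if i == 0 then (if j == 0 then a else b) else (if j == 0 then c else d).

(* A resonator is a triple (v, l, s) : wave speed, length, spacing. *)
Definition resonator := (R * R * R)%type.
Definition res_v (t : resonator) := t.1.1.
Definition res_l (t : resonator) := t.1.2.
Definition res_s (t : resonator) := t.2.

Definition prop_mx (lam l s v : R) : 'M[R]_2 :=
  mx2 (1 - s * (l / v ^+ 2) * lam) s (- (l / v ^+ 2) * lam) 1.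

Definition prop_mx_res (lam : R) (t : resonator) : 'M[R]_2 :=
  prop_mx lam (res_l t) (res_s t) (res_v t).

(* A block is a finite sequence of resonators [t_1; ...; t_L];
   block propagation matrix P_{t_L} ... P_{t_1}. *)
Definition block_prop_mx (lam : R) (b : seq resonator) : 'M[R]_2 :=
  foldl (fun M t => prop_mx_res lam t *m M) 1%:M b.

Definition valid_block (b : seq resonator) : Prop :=
  (0 < size b)%N /\
  (forall t, t \in b -> 0 < res_v t /\ 0 < res_l t /\ 0 < res_s t).

(* Index of the first resonator of block number j in the concatenation,
   normalized so that offset 0 = 0. *)
Definition block_offset (D : nat) (B : 'I_D -> seq resonator)
    (chi : int -> 'I_D) (j : int) : int :=
  match j with
  | Posz n => (\sum_(m < n) size (B (chi (Posz m))))%:Z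
  | Negz n => - (\sum_(m < n.+1) size (B (chi (- (Posz m.+1)))))%:Z
  end.

Definition is_resonator_seq (D : nat) (B : 'I_D -> seq resonator)
    (chi : int -> 'I_D) (r : int -> resonator) : Prop :=
  forall (j : int) (k : nat), (k < size (B (chi j)))%N ->
    r (block_offset B chi j + k%:Z) = nth (r 0) (B (chi j)) k.

Definition vnorm (x : 'cV[R]_2) : R := Num.sqrt (x 0 0 ^+ 2 + x 1 0 ^+ 2).

Fixpoint cocycle_fwd (A : int -> 'M[R]_2) (n : nat) (i : int) : 'M[R]_2 :=
  match n with
  | O => 1%:M
  | S m => A (i + m%:Z) *m cocycle_fwd A m i
  end.

Fixpoint cocycle_bwd (A : int -> 'M[R]_2) (n : nat) (i : int) : 'M[R]_2 :=
  match n with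
  | O => 1%:M
  | S m => invmx (A (i - (Posz m.+1))) *m cocycle_bwd A m i
  end.

Definition in_line (w : 'cV[R]_2) (x : 'cV[R]_2) : Prop :=
  exists c : R, x = c *: w.

Definition bounded_cocycle (A : int -> 'M[R]_2) : Prop :=
  exists M : R, forall i a b, `|A i a b| <= M.

Definition invariant_lines (A : int -> 'M[R]_2) (w : int -> 'cV[R]_2) : Prop :=
  (forall i, w i != 0) /\
  forall i (y : 'cV[R]_2),
    in_line (w (i + 1)) y <-> exists x, in_line (w i) x /\ y = A i *m x.

Definition unif_hyperbolic (A : int -> 'M[R]_2) : Prop :=
  bounded_cocycle A /\
  exists (s u : int -> 'cV[R]_2),
    invariant_lines A u /\ invariant_lines A s /\
    exists (C eta : R), 0 < C /\ 1 < eta /\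
      forall (i : int) (n : nat), (0 < n)%N ->
        (forall x, in_line (u i) x -> vnorm x = 1 ->
           vnorm (cocycle_bwd A n i *m x) <= C * eta ^- n) /\
        (forall x, in_line (s i) x -> vnorm x = 1 ->
           vnorm (cocycle_fwd A n i *m x) <= C * eta ^- n).

End Defs.

(* Main.v *)
Require Import Defs.
From HB Require Import structures.
From mathcomp Require Import all_boot all_order all_algebra.
From mathcomp Require Import reals.
From mathcomp Require Import zify ring lra.
Import Order.TTheory GRing.Theory Num.Theory.
Local Open Scope ring_scope.

Section Gen.
Variable R : realType.
Notation M2 := 'M[R]_2.
Notation V2 := 'cV[R]_2.

Lemma mulmxv2 (M : M2) (v : V2) i :
  (M *m v) i 0 = M i 0 * v 0 0 + M i 1 * v 1 0.
Proof.
rewrite mxE big_ord_recr big_ord_recr big_ord0 /=.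
have e0 : widen_ord (leqnSn 1) ord_max = 0 :> 'I_2 by apply: val_inj.
have e1 : (ord_max : 'I_2) = 1 by apply: val_inj.
by rewrite e0 e1 add0r.
Qed.

Lemma vnorm_ge0 (x : V2) : 0 <= vnorm x.
Proof. exact: sqrtr_ge0. Qed.

Lemma vnorm_eq0 (x : V2) : vnorm x = 0 -> x = 0.
Proof.
move=> /eqP; rewrite /vnorm sqrtr_eq0 => H.
have h0 : x 0 0 = 0 by apply/eqP; rewrite -sqrf_eq0; apply/eqP; nra.
have h1 : x 1 0 = 0 by apply/eqP; rewrite -sqrf_eq0; apply/eqP; nra.
apply/matrixP => i j; rewrite mxE; rewrite (ord1 j).
case: i => [[|[|k]] Hk] //.
- by rewrite -h0; congr (x _ _); apply: val_inj.
- by rewrite -h1; congr (x _ _); apply: val_inj.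
Qed.

Lemma vnorm0 : vnorm (0 : V2) = 0.
Proof. by rewrite /vnorm !mxE expr0n /= addr0 sqrtr0. Qed.

Lemma vnormZ (c : R) (x : V2) : vnorm (c *: x) = `|c| * vnorm x.
Proof.
rewrite /vnorm !mxE !exprMn -mulrDr sqrtrM ?sqr_ge0 //.
by rewrite sqrtr_sqr.
Qed.

Lemma vnorm_mul_bound (M : M2) (b : R) (x : V2) :
  (forall p q, `|M p q| <= b) -> vnorm (M *m x) <= (2 * b) * vnorm x.
Proof.
move=> Hb.
have b0 : 0 <= b by apply: le_trans (Hb 0 0); exact: normr_ge0.
have key : forall p, (M *m x) p 0 ^+ 2 <= 2 * b ^+ 2 * (x 0 0 ^+ 2 + x 1 0 ^+ 2).
  move=> p; rewrite mulmxv2.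
  have h1 := Hb p 0; have h2 := Hb p 1.
  have e1 : (M p 0) ^+ 2 <= b ^+ 2.
    by rewrite -real_normK ?num_real // lerXn2r ?nnegrE ?normr_ge0.
  have e2 : (M p 1) ^+ 2 <= b ^+ 2.
    by rewrite -real_normK ?num_real // lerXn2r ?nnegrE ?normr_ge0.
  have s0 := sqr_ge0 (x 0 0); have s1 := sqr_ge0 (x 1 0).
  have c1 : (M p 0 * x 0 0 + M p 1 * x 1 0) ^+ 2 <=
            2 * ((M p 0) ^+ 2 * x 0 0 ^+ 2 + (M p 1) ^+ 2 * x 1 0 ^+ 2).
    have := sqr_ge0 (M p 0 * x 0 0 - M p 1 * x 1 0); nra.
  apply: le_trans c1 _. nra.
rewrite /vnorm.
have -> : 2 * b = Num.sqrt ((2 * b) ^+ 2) by rewrite sqrtr_sqr ger0_norm //; nra.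
rewrite -sqrtrM ?sqr_ge0 // ler_sqrt; last by apply: mulr_ge0; [exact: sqr_ge0| nra].
have := key 0; have := key 1; nra.
Qed.


Definition linv (A : int -> M2) (w : int -> V2) :=
  (forall i, w i != 0) /\
  forall i, exists c : R, c != 0 /\ A i *m w i = c *: w (i + 1).

Lemma linvE A w : invariant_lines A w <-> linv A w.
Proof.
split=> [[nz H]|[nz H]]; split=> // i.
  have [H1 _] := H i (w (i + 1)).
  have [x [[d ->] E]] := H1 (ex_intro _ 1 (esym (scale1r _))).
  rewrite -scalemxAr in E.
  have dn0 : d != 0.
    apply/eqP=> d0; move: (nz (i + 1)); by rewrite E d0 scale0r eqxx.
  exists d^-1; split; first by rewrite invr_eq0.
  by rewrite E scalerA mulVf // scale1r.
have [c [cn0 E]] := H i.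
move=> y; split.
  case=> e ->; exists ((e / c) *: w i); split; first by exists (e / c).
  by rewrite -scalemxAr E scalerA mulrVK ?unitfE.
case=> x [[d ->] ->]; exists (d * c).
by rewrite -scalemxAr E scalerA.
Qed.

Definition fdec (A : int -> M2) (w : int -> V2) (C eta : R) :=
  forall i n, (0 < n)%N -> forall x, in_line (w i) x -> vnorm x = 1 ->
    vnorm (cocycle_fwd A n i *m x) <= C * eta ^- n.
Definition bdec (A : int -> M2) (w : int -> V2) (C eta : R) :=
  forall i n, (0 < n)%N -> forall x, in_line (w i) x -> vnorm x = 1 ->
    vnorm (cocycle_bwd A n i *m x) <= C * eta ^- n.

Lemma UHE A : unif_hyperbolic A <-> bounded_cocycle A /\
  exists s u, linv A u /\ linv A s /\ exists C eta, 0 < C /\ 1 < eta /\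
    bdec A u C eta /\ fdec A s C eta.
Proof.
split.
  case=> bA [s [u [iu [iS [C [eta [C0 [e1 H]]]]]]]].
  split=> //; exists s, u; split; first by apply/linvE.
  split; first by apply/linvE.
  exists C, eta; do 2 split => //.
  split=> i n n0; [exact: (H i n n0).1 | exact: (H i n n0).2].
case=> bA [s [u [iu [iS [C [eta [C0 [e1 [Hb Hf]]]]]]]]].
split=> //; exists s, u; split; first by apply/linvE.
split; first by apply/linvE.
exists C, eta; do 2 split => //.
move=> i n n0; split; [exact: Hb | exact: Hf].
Qed.

Lemma pow_inv_mono (e e' : R) n : 1 < e' -> e' <= e -> e ^- n <= e' ^- n.
Proof.
move=> h1 h2.
have p1 : 0 < e' ^+ n by apply: exprn_gt0; lra.
have p2 : 0 < e ^+ n by apply: exprn_gt0; lra.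
rewrite lef_pV2 ?posrE //.
by apply: lerXn2r; rewrite ?nnegrE; lra.
Qed.

Lemma fdec_mono A w (C eta C' eta' : R) : 0 <= C -> C <= C' -> 1 < eta' -> eta' <= eta ->
  fdec A w C eta -> fdec A w C' eta'.
Proof.
move=> C0 CC e1 ee H i n n0 x lx nx; apply: le_trans (H i n n0 x lx nx) _.
have := @pow_inv_mono _ _ n e1 ee.
have : 0 <= eta ^- n by rewrite invr_ge0 exprn_ge0 //; lra.
nra.
Qed.

Lemma bdec_mono A w (C eta C' eta' : R) : 0 <= C -> C <= C' -> 1 < eta' -> eta' <= eta ->
  bdec A w C eta -> bdec A w C' eta'.
Proof.
move=> C0 CC e1 ee H i n n0 x lx nx; apply: le_trans (H i n n0 x lx nx) _.
have := @pow_inv_mono _ _ n e1 ee.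
have : 0 <= eta ^- n by rewrite invr_ge0 exprn_ge0 //; lra.
nra.
Qed.

Lemma line_scale (M : M2) (w x : V2) (b : R) :
  (forall x, in_line w x -> vnorm x = 1 -> vnorm (M *m x) <= b) ->
  in_line w x -> vnorm (M *m x) <= b * vnorm x.
Proof.
move=> H [a ->].
have [t0|tn0] := eqVneq (vnorm (a *: w)) 0.
  by rewrite t0 (vnorm_eq0 _ t0) mulmx0 vnorm0 mulr0.
have tp : 0 < vnorm (a *: w) by rewrite lt_def tn0 vnorm_ge0.
set t := vnorm (a *: w) in tn0 tp *.
have -> : a *: w = t *: (t^-1 *: (a *: w)) by rewrite scalerA mulfV // scale1r.
rewrite -scalemxAr vnormZ (gtr0_norm tp) mulrC ler_pM2r //.
apply: H; first by exists (t^-1 * a); rewrite scalerA.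
by rewrite vnormZ -/t gtr0_norm ?invr_gt0 // mulVf.
Qed.


Notation fwd := (@cocycle_fwd R).
Notation bwd := (@cocycle_bwd R).

Lemma fwd_add A m n i : fwd A (m + n) i = fwd A n (i + m%:Z) *m fwd A m i.
Proof.
elim: n => [|n IH]; first by rewrite addn0 /= mul1mx.
rewrite addnS /= IH mulmxA; congr (A _ *m _ *m _); lia.
Qed.

Lemma fwd1 A i : fwd A 1 i = A i.
Proof. by rewrite /= addr0 mulmx1. Qed.

Lemma fwd_bound (A : int -> M2) (b : R) n i (x : V2) : (forall i p q, `|A i p q| <= b) ->
  vnorm (fwd A n i *m x) <= (2 * b) ^+ n * vnorm x.
Proof.
move=> Hb.
have b0 : 0 <= b by apply: le_trans (Hb 0 0 0); exact: normr_ge0.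
elim: n => [|n IH]; first by rewrite /= mul1mx expr0 mul1r.
rewrite /= -mulmxA; apply: le_trans (vnorm_mul_bound _ _ _ (Hb _)) _.
rewrite exprS -!mulrA; apply: ler_wpM2l => //; apply: ler_wpM2l => //.
Qed.

Lemma fwd_line A w n i : linv A w ->
  exists c : R, c != 0 /\ fwd A n i *m w i = c *: w (i + n%:Z).
Proof.
move=> [nz H]; elim: n => [|n [c [c0 IH]]].
  by exists 1; rewrite oner_eq0 /= mul1mx scale1r addr0.
have [d [d0 E]] := H (i + n%:Z).
exists (d * c); split; first by rewrite mulf_neq0.
rewrite /= -mulmxA IH -scalemxAr E scalerA mulrC; congr (_ *: w _); lia.
Qed.

Lemma fwd_unit A n i : (forall i, A i \in unitmx) -> fwd A n i \in unitmx.
Proof.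
move=> U; elim: n => [|n IH]; first by rewrite /= unitmx1.
by rewrite /= unitmx_mul U IH.
Qed.

Lemma bwd_fwd A n i : (forall i, A i \in unitmx) ->
  bwd A n (i + n%:Z) *m fwd A n i = 1%:M.
Proof.
move=> U; elim: n i => [|n IH] i; first by rewrite /= mul1mx.
have -> : fwd A n.+1 i = fwd A n (i + 1) *m A i.
  by have := fwd_add A 1 n i; rewrite fwd1.
rewrite /=.
have -> : i + (Posz n.+1) - Posz n.+1 = i by lia.
have -> : i + Posz n.+1 = (i + 1) + n%:Z by lia.
by rewrite mulmxA -(mulmxA (invmx (A i))) IH mulmx1 mulVmx.
Qed.

Lemma inv_from_left (M N : M2) : N *m M = 1%:M -> invmx M = N.
Proof.
move=> E; have [_ U] := mulmx1_unit E.
by rewrite -[invmx M]mul1mx -E -mulmxA mulmxV // mulmx1.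
Qed.

Lemma bwd_inv A n i : (forall i, A i \in unitmx) ->
  bwd A n (i + n%:Z) = invmx (fwd A n i).
Proof. by move=> U; symmetry; apply: inv_from_left; exact: bwd_fwd. Qed.

Definition rev (A : int -> M2) (i : int) := invmx (A (- i - 1)).

Lemma fwd_rev A n i : fwd (rev A) n i = bwd A n (- i).
Proof.
elim: n => [|n IH] //=; rewrite IH /rev; congr (invmx (A _) *m _); lia.
Qed.

Lemma linv_rev1 A w : (forall i, A i \in unitmx) -> linv A w ->
  linv (rev A) (fun i => w (- i)).
Proof.
move=> U [nz H]; split=> // i.
have [c [c0 E]] := H (- i - 1).
exists c^-1; split; first by rewrite invr_eq0.
have e : - i - 1 + 1 = - i by lia.
rewrite e in E.
have E2 : w (- i) = c^-1 *: (A (- i - 1) *m w (- i - 1)).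
  by rewrite E scalerA mulVf // scale1r.
rewrite /rev {1}E2 -scalemxAr mulmxA mulVmx // mul1mx; congr (_ *: w _); lia.
Qed.

Lemma linv_rev2 A w : (forall i, A i \in unitmx) -> linv (rev A) w ->
  linv A (fun i => w (- i)).
Proof.
move=> U [nz H]; split=> // k.
have [c [c0 E]] := H (- k - 1).
exists c^-1; split; first by rewrite invr_eq0.
have e1 : - (- k - 1) - 1 = k by lia.
have e2 : - k - 1 + 1 = - k by lia.
rewrite /rev e1 e2 in E.
have -> : w (- (k + 1)) = w (- k - 1) by congr (w _); lia.
have E2 : w (- k - 1) = c *: (A k *m w (- k)).
  by rewrite scalemxAr -E mulmxA mulmxV // mul1mx.
by rewrite E2 scalerA mulVf // scale1r.
Qed.

Lemma bdec_rev1 A w (C eta : R) : bdec A w C eta -> fdec (rev A) (fun i => w (- i)) C eta.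
Proof. by move=> H i n n0 x lx nx; rewrite fwd_rev; apply: H. Qed.

Lemma bdec_rev2 A w (C eta : R) : fdec (rev A) w C eta -> bdec A (fun i => w (- i)) C eta.
Proof.
move=> H i n n0 x lx nx.
have := H (- i) n n0 x lx nx; by rewrite fwd_rev opprK.
Qed.


Lemma unit_mul_eq0 (M : M2) (v : V2) : M \in unitmx -> M *m v = 0 -> v = 0.
Proof. by move=> U E; rewrite -[v]mul1mx -(mulVmx U) -mulmxA E mulmx0. Qed.

Lemma bernoulli (h : R) (n : nat) : 0 <= h <= 1 -> 1 - n%:R * h <= (1 - h) ^+ n.
Proof.
move=> /andP [h0 h1]; elim: n => [|n IH]; first by rewrite expr0 mul0r subr0.
rewrite exprS -natr1.
have p : 0 <= 1 - h by lra.
have q : 0 <= n%:R * h by apply: mulr_ge0.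
nra.
Qed.

Lemma root_ex (eta : R) (L : nat) : 1 < eta -> exists e : R, 1 < e /\ e ^+ L <= eta.
Proof.
move=> e1.
have Lp : 0 < L.+1%:R :> R by rewrite ltr0n.
have ei0 : 0 < eta^-1 < 1.
  by rewrite invr_gt0 invf_lt1 ?andbT; lra.
set h := (1 - eta^-1) / L.+1%:R.
have h0 : 0 < h by rewrite /h divr_gt0 //; lra.
have hL : L.+1%:R * h = 1 - eta^-1 by rewrite /h mulrC divfK // gt_eqF.
have h1 : h < 1.
  have : 1 <= L.+1%:R :> R by rewrite ler1n.
  nra.
exists (1 - h)^-1; split.
  rewrite invf_gt1; lra.
rewrite exprVn.
have b := bernoulli h L ltac:(apply/andP; split; lra).
have hh : 0 < (1 - h) ^+ L by apply: exprn_gt0; lra.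
have : eta^-1 <= (1 - h) ^+ L.
  apply: le_trans b; rewrite -natr1 in hL; nra.
rewrite -[X in _ <= X]invrK lef_pV2 ?posrE //; first lra.
by rewrite invr_gt0.
Qed.

Lemma arith1 (K C1 eta e : R) (N q L : nat) : 1 <= K -> 1 <= C1 -> 1 < eta -> 1 < e ->
  e ^+ L <= eta -> (N <= (q + 2) * L)%N ->
  K ^+ L * (C1 * eta ^- q * K ^+ L) <= K ^+ (2 * L) * C1 * eta ^+ 2 * e ^- N.
Proof.
move=> K1 C11 eta1 e1 eL hN.
have KL : 0 < K ^+ L by apply: exprn_gt0; lra.
have e2 : e ^+ N <= eta ^+ (q + 2).
  apply: le_trans (_ : e ^+ ((q + 2) * L) <= _).
    by apply: ler_weXn2l => //; lra.
  rewrite mulnC exprM; apply: lerXn2r => //; rewrite ?nnegrE; try lra.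
  by apply: exprn_ge0; lra.
have eN : 0 < e ^+ N by apply: exprn_gt0; lra.
have eq0 : 0 < eta ^+ q by apply: exprn_gt0; lra.
have ie : eta ^- q = eta ^+ 2 * (eta ^+ (q + 2))^-1.
  rewrite exprD invfM mulrCA mulfV ?mulr1 // gt_eqF // exprn_gt0 //; lra.
have : (eta ^+ (q + 2))^-1 <= e ^- N.
  by rewrite lef_pV2 ?posrE // exprn_gt0 //; lra.
rewrite ie mulnC exprM expr2 -/(K ^+ L ^+ 2) expr2.
have := sqr_ge0 eta; have : 0 <= (eta ^+ (q + 2))^-1 by rewrite invr_ge0 exprn_ge0 //; lra.
have : 0 <= eta ^+ 2 by exact: sqr_ge0.
move=> a b c d.
have : 0 <= K ^+ L * K ^+ L * C1 by apply: mulr_ge0; nra.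
move=> f.
have := ler_wpM2l (mulr_ge0 f a) d.
nra.
Qed.


Section Blocks.
Variables (A Bk : int -> M2) (o : int -> int) (len : int -> nat) (L : nat).
Hypothesis Hl0 : forall j, (0 < len j)%N.
Hypothesis HlL : forall j, (len j <= L)%N.
Hypothesis Ho0 : o 0 = 0.
Hypothesis Ho : forall j, o (j + 1) = o j + (len j)%:Z.
Hypothesis HB : forall j, Bk j = fwd A (len j) (o j).

Lemma blocks_fwd n j : exists m : nat, [/\ (n <= m)%N, (m <= n * L)%N,
  o (j + n%:Z) = o j + m%:Z & fwd Bk n j = fwd A m (o j)].
Proof.
elim: n => [|n [m [h1 h2 h3 h4]]].
  exists 0%N; split => //; have -> : j + 0%:Z = j by lia.
  lia.
exists (m + len (j + n%:Z))%N; split.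
- have := Hl0 (j + n%:Z); lia.
- have := HlL (j + n%:Z); rewrite mulSn; lia.
- have -> : j + (n.+1)%:Z = (j + n%:Z) + 1 by lia.
  rewrite Ho h3; lia.
- by rewrite /= HB h4 h3 fwd_add.
Qed.

Lemma o_mono j n : o j + n%:Z <= o (j + n%:Z).
Proof. have [m [h1 _ h3 _]] := blocks_fwd n j; rewrite h3; lia. Qed.

Lemma o_lt a b : a < b -> o a + (len a)%:Z <= o b.
Proof.
move=> ab; rewrite -Ho; have := o_mono (a + 1) (absz (b - a - 1)%R).
have -> : a + 1 + Posz (absz (b - a - 1)%R) = b by lia.
by move=> h; apply: le_trans h; rewrite lerDl.
Qed.

Lemma blk_ex i : exists j, (o j <= i) && (i < o (j + 1)).
Proof.
case: i => n.
  elim: n => [|n [j /andP [h1 h2]]].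
    exists 0; rewrite Ho Ho0; apply/andP; split => //; have := Hl0 0; lia.
  case: (boolP (Posz n.+1 < o (j + 1))) => h.
    by exists j; apply/andP; split => //; lia.
  exists (j + 1); rewrite (Ho (j + 1)); apply/andP; split; have := Hl0 (j + 1); lia.
elim: n => [|n [j /andP [h1 h2]]].
  exists (-1); have := Ho (-1); rewrite (_ : -1 + 1 = 0) // Ho0 => h.
  apply/andP; split; have := Hl0 (-1); lia.
case: (boolP (o j <= Negz n.+1)) => h.
  by exists j; apply/andP; split => //; lia.
exists (j - 1); have := Ho (j - 1); rewrite (_ : j - 1 + 1 = j); last by lia.
move=> e; apply/andP; split; have := Hl0 (j - 1); lia.
Qed.

Lemma blk_uniq j j' i : o j <= i -> i < o (j + 1) -> o j' <= i -> i < o (j' + 1) -> j = j'.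
Proof.
move=> h1 h2 h3 h4; case: (ltgtP j j') => // c.
  rewrite (Ho j) in h2; rewrite (Ho j') in h4; have := o_lt _ _ c; lia.
  rewrite (Ho j) in h2; rewrite (Ho j') in h4; have := o_lt _ _ c; lia.
Qed.

Definition blk i := xchoose (blk_ex i).

Lemma blkP i : o (blk i) <= i /\ i < o (blk i + 1).
Proof. by have /andP [] := xchooseP (blk_ex i). Qed.

Lemma blk_eq j i : o j <= i -> i < o (j + 1) -> blk i = j.
Proof. by move=> h1 h2; have [h3 h4] := blkP i; apply: (blk_uniq _ _ _ h3 h4 h1 h2). Qed.

Definition pos i := absz (i - o (blk i))%R.

Lemma posE i : i = o (blk i) + (pos i)%:Z.
Proof. have [h1 h2] := blkP i; rewrite /pos; lia. Qed.

Lemma pos_lt i : (pos i < len (blk i))%N.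
Proof. have [h1 h2] := blkP i; rewrite Ho in h2; rewrite /pos; lia. Qed.

Lemma F1 w (C eta : R) : 0 < C -> 1 < eta -> linv A w -> fdec A w C eta ->
  linv Bk (fun j => w (o j)) /\ fdec Bk (fun j => w (o j)) C eta.
Proof.
move=> C0 e1 [nz H] Hf; split.
  split=> // j; have [c [c0 E]] := fwd_line A w (len j) (o j) (conj nz H).
  by exists c; split => //; rewrite HB E Ho.
move=> j n n0 x lx nx; have [m [h1 _ _ h4]] := blocks_fwd n j; rewrite h4.
have m0 : (0 < m)%N by lia.
apply: le_trans (Hf _ _ m0 _ lx nx) _.
rewrite ler_pM2l // lef_pV2 ?posrE ?exprn_gt0 //; try lra.
by apply: ler_weXn2l => //; lra.
Qed.


Lemma F2 w' (C eta : R) : (forall i, A i \in unitmx) -> bounded_cocycle A ->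
  0 < C -> 1 < eta -> linv Bk w' -> fdec Bk w' C eta ->
  exists w (C' eta' : R), [/\ linv A w, fdec A w C' eta', 0 < C' & 1 < eta'].
Proof.
move=> U [b Hb] C0 e1 [nz' Hl'] Hf.
pose w i := fwd A (pos i) (o (blk i)) *m w' (blk i).
have wo : forall j, w (o j) = w' j.
  move=> j; have bj : blk (o j) = j.
    by apply: blk_eq; [lia | rewrite Ho; have := Hl0 j; lia].
  have pj : pos (o j) = 0%N by rewrite /pos bj; lia.
  by rewrite /w bj pj mul1mx.
have lin : linv A w.
  split.
    move=> i; apply/eqP => E; have := nz' (blk i).
    by rewrite (unit_mul_eq0 _ _ (fwd_unit _ _ _ U) E) eqxx.
  move=> i; have hi := posE i; have hk := pos_lt i.
  case: (ltnP (pos i).+1 (len (blk i))) => hk1.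
  - have bj : blk (i + 1) = blk i by apply: blk_eq; [lia | rewrite Ho; lia].
    have pj : pos (i + 1) = (pos i).+1 by rewrite /pos bj; lia.
    exists 1; split; first exact: oner_neq0.
    rewrite scale1r /w bj pj /= mulmxA; congr (A _ *m _ *m _); lia.
  - have e1' : (pos i).+1 = len (blk i) by lia.
    have bj : blk (i + 1) = blk i + 1.
      apply: blk_eq; first by rewrite Ho; lia.
      by rewrite (Ho (blk i + 1)) Ho; have := Hl0 (blk i + 1); lia.
    have [c [c0 E]] := Hl' (blk i).
    exists c; split => //.
    have -> : w (i + 1) = w' (blk i + 1) by rewrite -wo; congr w; rewrite Ho; lia.
    rewrite -E HB /w mulmxA -e1' /=; congr (A _ *m _ *m _); lia.
pose b' := Num.max b 1.
have Hb' : forall i p q, `|A i p q| <= b' by move=> i p q; rewrite le_max Hb.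
pose K := 2 * b'.
have b1 : 1 <= b' by rewrite le_max lexx orbT.
have K1 : 1 <= K by rewrite /K; lra.
have [e [e1' eL]] := root_ex eta L e1.
pose C1 := C + 1.
have C11 : 1 <= C1 by rewrite /C1; lra.
exists w, (K ^+ (2 * L) * C1 * eta ^+ 2), e; split => //; last first.
  by rewrite !mulr_gt0 // ?exprn_gt0 //; lra.
have Kt : forall t q y, (t <= L)%N -> vnorm (fwd A t q *m y) <= K ^+ L * vnorm y.
  move=> t q y tL; apply: le_trans (fwd_bound A b' t q y Hb') _.
  apply: (ler_wpM2r (vnorm_ge0 _)); exact: ler_weXn2l.
have KL1 : 1 <= K ^+ L by apply: exprn_ege1.
move=> i n n0 x lx nx.
have hi := posE i; have hk := pos_lt i; have [h21 h22] := blkP (i + n%:Z).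
case: (eqVneq (blk (i + n%:Z)) (blk i)) => ej.
  rewrite ej Ho in h22.
  have nL : (n <= L)%N by have := HlL (blk i); lia.
  apply: le_trans (Kt n i x nL) _.
  rewrite nx mulr1.
  have hN : (n <= (0 + 2) * L)%N by lia.
  apply: le_trans (arith1 K C1 eta e n 0 L K1 C11 e1 e1' eL hN).
  rewrite expr0 invr1 mulr1.
  have : 1 <= C1 * K ^+ L by nra.
  nra.
have gt : blk i < blk (i + n%:Z).
  rewrite lt_neqAle eq_sym ej /= leNgt; apply/negP => c.
  have := o_lt _ _ c; rewrite Ho in h22; lia.
move: gt h21 h22 ej hi hk; set j2 := blk (i + n%:Z); set j := blk i => gt h21 h22 ej hi hk.
pose p := absz (j2 - j - 1)%R.
have ej2 : j2 = (j + 1) + p%:Z by rewrite /p; lia.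
have [m [hm1 hm2 hm3 hm4]] := blocks_fwd p (j + 1).
rewrite -ej2 in hm3.
pose t1 := (len j - pos i)%N.
have ht1 : i + t1%:Z = o (j + 1) by rewrite Ho /t1; lia.
pose t2 := absz (i + n%:Z - o j2)%R.
have ht2 : (t2 < len j2)%N by rewrite Ho in h22; rewrite /t2; lia.
have hn : n = (t1 + m + t2)%N by rewrite /t2; lia.
have Efwd : fwd A n i = fwd A t2 (o j2) *m (fwd A m (o (j + 1)) *m fwd A t1 i).
  rewrite hn (fwd_add A (t1 + m) t2) (fwd_add A t1 m) ht1.
  by have -> : i + (t1 + m)%N%:Z = o j2 by rewrite hm3 -ht1; lia.
have y_line : in_line (w' (j + 1)) (fwd A t1 i *m x).
  case: lx => a ->; have [c [c0 E]] := fwd_line A w t1 i lin.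
  by exists (a * c); rewrite -scalemxAr E scalerA ht1 wo.
have ny : vnorm (fwd A t1 i *m x) <= K ^+ L.
  have t1L : (t1 <= L)%N by have := HlL j; rewrite /t1; lia.
  by have := Kt t1 i x t1L; rewrite nx mulr1.
have nz : vnorm (fwd Bk p (j + 1) *m (fwd A t1 i *m x)) <=
          C1 * eta ^- p * vnorm (fwd A t1 i *m x).
  have [p0|pp] := posnP p.
    rewrite p0 /= mul1mx expr0 invr1 mulr1.
    have := vnorm_ge0 (fwd A t1 i *m x); nra.
  apply: le_trans (line_scale _ _ _ _ (Hf (j + 1) p pp) y_line) _.
  apply: (ler_wpM2r (vnorm_ge0 _)); apply: ler_wpM2r; last by rewrite /C1; lra.
  by rewrite invr_ge0 exprn_ge0 //; lra.
rewrite Efwd -!mulmxA -hm4.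
have t2L : (t2 <= L)%N by have := HlL j2; lia.
apply: le_trans (Kt t2 (o j2) _ t2L) _.
have hN : (n <= (p + 2) * L)%N by have := HlL j; rewrite /t1 in hn; nia.
apply: le_trans (arith1 K C1 eta e n p L K1 C11 e1 e1' eL hN).
apply: ler_wpM2l; first by apply: exprn_ge0; lra.
apply: le_trans nz _; apply: ler_wpM2l => //.
by apply: mulr_ge0; [lra | rewrite invr_ge0 exprn_ge0 //; lra].
Qed.

End Blocks.


Section Main.
Variables (A Bk : int -> M2) (o : int -> int) (len : int -> nat) (L : nat).
Hypothesis Hl0 : forall j, (0 < len j)%N.
Hypothesis HlL : forall j, (len j <= L)%N.
Hypothesis Ho0 : o 0 = 0.
Hypothesis Ho : forall j, o (j + 1) = o j + (len j)%:Z.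
Hypothesis HB : forall j, Bk j = fwd A (len j) (o j).
Hypothesis U : forall i, A i \in unitmx.
Hypothesis bA : bounded_cocycle A.
Hypothesis brA : bounded_cocycle (rev A).
Hypothesis bBk : bounded_cocycle Bk.

Let o' j := - o (- j).
Let len' j := len (- j - 1).
Let Hl0' j : (0 < len' j)%N. Proof. exact: Hl0. Qed.
Let HlL' j : (len' j <= L)%N. Proof. exact: HlL. Qed.
Let Ho0' : o' 0 = 0. Proof. by rewrite /o' oppr0 Ho0 oppr0. Qed.
Let Ho' j : o' (j + 1) = o' j + (len' j)%:Z.
Proof.
rewrite /o' /len'; have := Ho (- j - 1).
rewrite (_ : - j - 1 + 1 = - j); last by lia.
rewrite (_ : - (j + 1) = - j - 1); last by lia.
move=> ->; lia.
Qed.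
Let UBk j : Bk j \in unitmx. Proof. by rewrite HB; apply: fwd_unit. Qed.
Let UrA i : rev A i \in unitmx. Proof. by rewrite /rev unitmx_inv. Qed.
Let HB' j : rev Bk j = fwd (rev A) (len' j) (o' j).
Proof.
rewrite /rev HB fwd_rev /o' opprK /len' -bwd_inv //.
have := Ho (- j - 1); rewrite (_ : - j - 1 + 1 = - j); last by lia.
by move=> ->.
Qed.

Lemma gen_main : unif_hyperbolic Bk <-> unif_hyperbolic A.
Proof.
rewrite !UHE; split.
  case=> _ [s' [u' [iu' [is' [C [eta [C0 [e1 [hb hf]]]]]]]]].
  have [s [C1 [eta1 [is1 hs C10 e11]]]] := @F2 A Bk o len L Hl0 HlL Ho0 Ho HB s' C eta U bA C0 e1 is' hf.
  have [w [C2 [eta2 [iw hw C20 e21]]]] := @F2 (rev A) (rev Bk) o' len' L Hl0' HlL' Ho0' Ho' HB' _ C eta UrA brA C0 e1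
     (linv_rev1 _ _ UBk iu') (bdec_rev1 _ _ _ _ hb).
  split => //; exists s, (fun i => w (- i)); split; first exact: linv_rev2 _ _ U iw.
  split => //; exists (C1 + C2), (Num.min eta1 eta2).
  have m1 : 1 < Num.min eta1 eta2 by rewrite lt_min e11 e21.
  split; first lra.
  split => //; split.
    apply: (bdec_mono _ _ C2 eta2) => //; try lra.
      by rewrite ge_min lexx orbT.
    exact: bdec_rev2 _ _ _ _ hw.
  apply: (fdec_mono _ _ C1 eta1) => //; try lra.
  by rewrite ge_min lexx.
case=> _ [s [u [iu [is1 [C [eta [C0 [e1 [hb hf]]]]]]]]].
have [is' hs'] := @F1 A Bk o len L Hl0 HlL Ho0 Ho HB s C eta C0 e1 is1 hf.
have [iw hw] := @F1 (rev A) (rev Bk) o' len' L Hl0' HlL' Ho0' Ho' HB' _ C eta C0 e1 (linv_rev1 _ _ U iu) (bdec_rev1 _ _ _ _ hb).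
split => //; exists (fun j => s (o j)), (fun j => u (- o' (- j))).
split; first exact: linv_rev2 _ _ UBk iw.
split => //; exists C, eta; do 2 split => //; split => //.
exact: bdec_rev2 _ _ _ _ hw.
Qed.

End Main.

End Gen.
Section App.
Variable R : realType.
Lemma mx2_mul (a b c d e f g h : R) : mx2 a b c d *m mx2 e f g h =
  mx2 (a * e + b * g) (a * f + b * h) (c * e + d * g) (c * f + d * h).
Proof.
apply/matrixP => i j; rewrite !mxE big_ord_recr big_ord_recr big_ord0 /= add0r !mxE.
case: i => [[|[|?]] ?] //; case: j => [[|[|?]] ?] //=.
Qed.
Lemma mx2_1 : (1%:M : 'M[R]_2) = mx2 1 0 0 1.
Proof.
apply/matrixP => i j; rewrite !mxE.
case: i => [[|[|?]] ?] //; case: j => [[|[|?]] ?] //=.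
Qed.
Variables (D : nat) (B : 'I_D -> seq (resonator R)) (chi : int -> 'I_D).
Lemma offset_succ j : block_offset B chi (j + 1) = block_offset B chi j + (size (B (chi j)))%:Z.
Proof.
case: j => n.
  have -> : Posz n + 1 = Posz n.+1 by lia.
  rewrite /block_offset big_ord_recr /= PoszD //.
case: n => [|n].
  have -> : Negz 0 + 1 = 0 by lia.
  rewrite /block_offset /= big_ord0 big_ord_recr big_ord0 /= add0n.
  rewrite (_ : size (B (chi (- 1))) = size (B (chi (Negz 0)))) //; lia.
have -> : Negz n.+1 + 1 = Negz n by lia.
rewrite /block_offset (big_ord_recr n.+1) /=.
rewrite (_ : size (B (chi (- Posz n.+2))) = size (B (chi (Negz n.+1)))) //; lia.
Qed.

Variables (r : int -> resonator R) (lam : R).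
Hypothesis Hr : is_resonator_seq B chi r.

Lemma block_fwd j : block_prop_mx lam (B (chi j)) =
  cocycle_fwd (fun i => prop_mx_res lam (r i)) (size (B (chi j))) (block_offset B chi j).
Proof.
rewrite /block_prop_mx.
suff H : forall k, (k <= size (B (chi j)))%N ->
    foldl (fun M t => prop_mx_res lam t *m M) 1%:M (take k (B (chi j))) =
    cocycle_fwd (fun i => prop_mx_res lam (r i)) k (block_offset B chi j).
  by rewrite -H // take_size.
elim=> [|k IH] hk; first by rewrite take0.
by rewrite (take_nth (r 0)) // foldl_rcons IH ?(ltnW hk) //= Hr.
Qed.

Lemma prop_unit t : prop_mx_res lam t \in unitmx.
Proof.
have E : prop_mx_res lam t *m mx2 1 (- res_s t) (res_l t / res_v t ^+ 2 * lam)
            (1 - res_s t * (res_l t / res_v t ^+ 2) * lam) = 1%:M.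
  rewrite /prop_mx_res /prop_mx mx2_mul mx2_1; congr (mx2 _ _ _ _); ring.
by have [] := mulmx1_unit E.
Qed.
End App.

Lemma fin_bounded (R : realType) (T : finType) (F : T -> 'M[R]_2) (A : int -> 'M[R]_2) :
  (forall i, exists t, A i = F t) -> bounded_cocycle A.
Proof.
move=> H; exists (\sum_t \sum_a \sum_b `|F t a b|) => i a b.
have [t ->] := H i.
have g0 : forall t' a', 0 <= \sum_b' `|F t' a' b'| by move=> t' a'; apply: sumr_ge0 => *.
have g1 : forall t', 0 <= \sum_a' \sum_b' `|F t' a' b'| by move=> t'; apply: sumr_ge0 => *.
apply: (@le_trans _ _ (\sum_b' `|F t a b'|)).
  by rewrite (bigD1 b) //= lerDl; apply: sumr_ge0 => *.
apply: (@le_trans _ _ (\sum_a' \sum_b' `|F t a' b'|)).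
  by rewrite [X in _ <= X](bigD1 a) //= lerDl; apply: sumr_ge0 => *.
by rewrite [X in _ <= X](bigD1 t) //= lerDl; apply: sumr_ge0 => *.
Qed.

Theorem lemma3p15 (R : realType) (D : nat) (B : 'I_D -> seq (resonator R))
    (chi : int -> 'I_D) (r : int -> resonator R) (lam : R) :
  (forall d, valid_block (B d)) ->
  is_resonator_seq B chi r ->
  0 <= lam ->
  unif_hyperbolic (fun j : int => block_prop_mx lam (B (chi j))) <->
  unif_hyperbolic (fun i : int => prop_mx_res lam (r i)).
Proof.
move=> Hv Hr _.
pose A := fun i => prop_mx_res lam (r i).
pose Bk := fun j => block_prop_mx lam (B (chi j)).
pose o := block_offset B chi.
pose len := fun j => size (B (chi j)).
have Hl0 : forall j, (0 < len j)%N by move=> j; have [] := Hv (chi j).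
pose L := (\sum_(d < D) size (B d))%N.
have HlL : forall j, (len j <= L)%N.
  by move=> j; rewrite /L (bigD1 (chi j)) //= leq_addr.
have Ho0 : o 0 = 0 by rewrite /o /block_offset /= big_ord0.
have Ho : forall j, o (j + 1) = o j + (len j)%:Z by move=> j; exact: offset_succ.
have HB : forall j, Bk j = cocycle_fwd A (len j) (o j) by move=> j; exact: block_fwd.
have famA : forall i, exists t : ('I_D * 'I_L.+1)%type,
    A i = prop_mx_res lam (nth (r 0) (B t.1) t.2).
  move=> i; have [j /andP [h1 h2]] := @blk_ex o len Hl0 Ho0 Ho i.
  move: h2; rewrite Ho => h2.
  pose k := absz (i - o j)%R.
  have hk : (k < len j)%N by rewrite /k; lia.
  exists (chi j, inord k); rewrite /A /= inordK; last by have := HlL j; lia.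
  rewrite -Hr; last exact: hk.
  congr (prop_mx_res lam (r _)); rewrite -/(o j) /k; lia.
have bA : bounded_cocycle A by apply: fin_bounded famA.
have brA : bounded_cocycle (rev R A).
  apply: (@fin_bounded R ('I_D * 'I_L.+1)%type (fun t => invmx (prop_mx_res lam (nth (r 0) (B t.1) t.2)))).
  by move=> i; have [t e] := famA (- i - 1); exists t; rewrite /rev e.
have bBk : bounded_cocycle Bk.
  apply: (@fin_bounded R _ (fun d => block_prop_mx lam (B d))).
  by move=> j; exists (chi j).
have U : forall i, A i \in unitmx by move=> i; exact: prop_unit.
exact: (@gen_main R A Bk o len L Hl0 HlL Ho0 Ho HB U bA brA bBk).
Qed.
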